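(* Let $G=K\rtimes_\phi H$ be a finite Frobenius group with kernel $K$ and complement $H$, and suppose $K$ is abelian. Then $\mathrm{Aut}(G)\cong K\rtimes N_{\mathrm{Aut}(K)}(\phi(H))$, which is a subgroup of the holomorph $\mathrm{Hol}(K)=K\rtimes\mathrm{Aut}(K)$ (with $\mathrm{Aut}(K)$ acting naturally on $K$).
   Context: A finite group $G=K\rtimes_\phi H$ with $K,H$ nontrivial is a Frobenius group with kernel $K$ and complement $H$ if for every $h\in H$, $h\neq1$, the automorphism $\phi(h)$ fixes no nonidentity element of $K$. $N_{\mathrm{Aut}(K)}(\phi(H))$ is the normalizer of $\phi(H)$ in $\mathrm{Aut}(K)$. *)

(* Defs.v *)
From HB Require Import structures.
From mathcomp Require Import all_boot all_fingroup all_solvable.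
Set Implicit Arguments. Unset Strict Implicit. Unset Printing Implicit Defensive.

(* Main.v *)
Require Import Defs.
From HB Require Import structures.
From mathcomp Require Import all_boot all_fingroup all_solvable.
Set Implicit Arguments. Unset Strict Implicit. Unset Printing Implicit Defensive.
Local Open Scope group_scope.

Lemma conjg_comm (T : finGroupType) (x y : T) : commute x y -> x ^ y = x.
Proof. by move=> cxy; rewrite /conjg cxy mulKg. Qed.

Section Main.
Variables (gT : finGroupType) (G K H : {group gT}).
Hypotheses (defG : K ><| H = G) (ntK : K :!=: 1) (ntH : H :!=: 1)
  (regKH : semiregular K H) (abK : abelian K).

Local Notation to := (aut_groupAction K).
Local Notation s1 := (sdpair1 to).
Local Notation s2 := (sdpair2 to).
Local Notation phi := (conj_aut K).

Lemma toE x a : to x a = a x.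
Proof. by []. Qed.

Let frobG : [Frobenius G = K ><| H].
Proof. exact/Frobenius_semiregularP. Qed.

Let nKH : H \subset 'N(K).
Proof. by case/sdprodP: defG. Qed.

Let sHphi : H \subset phi @*^-1 (Aut K).
Proof.
apply/subsetP=> h Hh; rewrite inE (subsetP nKH) //=.
rewrite inE; apply: (subsetP (Aut_conj_aut K H)); apply: mem_morphim => //; exact: (subsetP nKH).
Qed.

Definition fH := restrm sHphi (s2 \o phi).

Lemma fHE h : h \in H -> fH h = s2 (phi h).
Proof. by []. Qed.

Lemma fH_act : {in K & H, morph_act 'J 'J s1 fH}.
Proof.
move=> k h Kk Hh /=.
rewrite fHE // -sdpair_act //; last by rewrite (subsetP (Aut_conj_aut K H)) // mem_morphim // (subsetP nKH).
by rewrite toE norm_conj_autE // (subsetP nKH).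
Qed.

Definition iota := sdprodm defG fH_act.


Let sKG : K \subset G. Proof. by case/sdprod_context: defG => /andP[]. Qed.
Let sHG : H \subset G. Proof. by case/sdprod_context: defG. Qed.

Lemma phiH_Aut : phi @* H \subset Aut K.
Proof. exact: Aut_conj_aut. Qed.

Lemma iotaK : iota @* K = s1 @* K.
Proof. exact: morphim_sdprodml. Qed.

Lemma iotaH : iota @* H = s2 @* (phi @* H).
Proof.
rewrite /iota morphim_sdprodmr // /fH restrmEsub // morphim_comp.
by [].
Qed.


Lemma cHK : 'C_H(K) = 1.
Proof.
have [k /setD1P[ntk Kk]] : exists k, k \in K^#.
  by apply/set0Pn; rewrite setD_eq0 subG1.
apply/trivgP; rewrite -(semiregular_sym regKH (x:=k)) ?inE ?ntk //.
apply/subsetP=> y /setIP[Hy cKy]; rewrite inE Hy; apply/cent1P; by apply: (centP cKy).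
Qed.

Lemma injm_iota : 'injm iota.
Proof.
rewrite injm_sdprodm injm_sdpair1 /=; apply/andP; split.
  rewrite ker_restrm ker_comp (trivgP (injm_sdpair2 _)) -kerE ker_conj_aut.
  by rewrite cHK.
rewrite restrmEsub // morphim_comp; apply/eqP/trivgP.
rewrite -(im_sdpair_TI (aut_groupAction K)); apply: setIS; apply: morphimS.
exact: phiH_Aut.
Qed.

Local Notation Gs := (iota @* G).
Local Notation K1 := (s1 @* K).
Local Notation H1 := (s2 @* (phi @* H)).
Local Notation N := ('N_(Aut K)(phi @* H)).
Local Notation N1 := (s2 @* N).

Lemma GsE : Gs = K1 * H1.
Proof. by rewrite /iota im_sdprodm /fH restrmEsub // morphim_comp. Qed.

Lemma AutGs : Aut G \isog Aut Gs.
Proof. by rewrite isog_sym; apply: injm_Aut; [apply: injm_iota | apply: subxx]. Qed.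

Lemma charK : K \char G.
Proof.
have hallK := Frobenius_ker_Hall frobG.
have [nsKG _ _ _ _] := sdprod_context defG.
rewrite -(normal_Hall_pcore (Hall_pi hallK) nsKG); exact: pcore_char.
Qed.

Lemma charK1 : K1 \char Gs.
Proof. by rewrite -iotaK; apply: injm_char; [apply: injm_iota | apply: subxx | apply: charK]. Qed.

Lemma nK1N1 : N1 \subset 'N(K1).
Proof.
apply: subset_trans (im_sdpair_norm (aut_groupAction K)).
by apply: morphimS; apply: subsetIl.
Qed.

Lemma nK1H1 : H1 \subset 'N(K1).
Proof.
apply: subset_trans (im_sdpair_norm (aut_groupAction K)).
by apply: morphimS; apply: phiH_Aut.
Qed.

Lemma nH1N1 : N1 \subset 'N(H1).
Proof. by apply: morphim_norms; apply: subsetIr. Qed.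

Lemma sTN : K1 <*> N1 \subset 'N(Gs).
Proof.
rewrite join_subG; apply/andP; split.
  rewrite -iotaK; apply: subset_trans (normG _); exact: morphimS.
by rewrite GsE normsM ?nK1N1 ?nH1N1.
Qed.


Lemma conjK1 k a x : k \in K -> a \in Aut K -> x \in K ->
  s1 x ^ (s1 k * s2 a) = s1 (a x).
Proof.
move=> Kk Aa Kx; rewrite conjgM -morphJ //.
have ->: x ^ k = x by apply: conjg_comm; apply: (centsP abK).
by rewrite -sdpair_act.
Qed.

Lemma s2phiE h x : h \in H -> x \in K -> s1 x ^ s2 (phi h) = s1 (x ^ h).
Proof.
move=> Hh Kx; rewrite -sdpair_act //; last first.
  by apply: (subsetP phiH_Aut); apply: mem_morphim => //; apply: (subsetP nKH).
by rewrite toE norm_conj_autE // (subsetP nKH).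
Qed.

Lemma TE : K1 <*> N1 = K1 * N1.
Proof. by rewrite norm_joinEr // nK1N1. Qed.

Lemma cTGs : (K1 <*> N1) :&: 'C(Gs) \subset [1].
Proof.
apply/subsetP=> t /setIP[]; rewrite TE => /mulsgP[u v /morphimP[k _ Kk ->]].
move=> /morphimP[a _ /setIP[Aa nHa] ->] -> cGt.
have GsK: forall x, x \in K -> s1 x \in Gs.
  by move=> x Kx; rewrite GsE -[s1 x]mulg1; apply: mem_mulg; rewrite ?group1 // mem_morphim.
have a1 : a = 1.
  apply: (eq_Aut Aa (group1 (Aut_group K))) => x Kx.
  rewrite perm1.
  apply: (injmP (injm_sdpair1 (aut_groupAction K))); rewrite ?(Aut_closed Aa) //.
  apply: etrans (esym (conjK1 Kk Aa Kx)) _; apply: conjg_comm; apply: commute_sym; apply: (centP cGt); exact: GsK.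
rewrite a1 morph1 mulg1 in cGt *.
have [h /setD1P[nth Hh]] : exists h, h \in H^#.
  by apply/set0Pn; rewrite setD_eq0 subG1.
have : k \in 'C_K[h].
  rewrite inE Kk; apply/cent1P.
  suff: k ^ h = k by move=> e; rewrite /commute -{2}e /conjg mulgA mulgV mul1g.
  apply: (injmP (injm_sdpair1 (aut_groupAction K))) => //.
    by rewrite memJ_norm // (subsetP nKH).
  apply: etrans (esym (s2phiE Hh Kk)) _; apply: conjg_comm; apply: (centP cGt).
  rewrite GsE; rewrite -[s2 _]mul1g; apply: mem_mulg; rewrite ?group1 //.
  by apply: mem_morphim; [apply: (subsetP phiH_Aut) | ]; apply: mem_morphim => //; apply: (subsetP nKH).
have ->: 'C_K[h] = 1 by apply: regKH; rewrite !inE nth.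
by move=> /set1P ->; rewrite morph1 set11.
Qed.


Lemma GsK x : x \in K -> s1 x \in Gs.
Proof. by move=> Kx; rewrite GsE -[s1 x]mulg1; apply: mem_mulg; rewrite ?group1 // mem_morphim. Qed.

Lemma sK1Gs : K1 \subset Gs.
Proof. by rewrite -iotaK; apply: morphimS. Qed.

Lemma sH1Gs : H1 \subset Gs.
Proof. by rewrite -iotaH; apply: morphimS. Qed.

Lemma GsP z : z \in Gs ->
  exists2 y, y \in K & exists2 h, h \in H & z = s1 y * s2 (phi h).
Proof.
rewrite GsE => /mulsgP[u v /morphimP[y _ Ky ->] /morphimP[q _ Pq ->] ->].
have /morphimP[h _ Hh ->] := Pq.
by exists y => //; exists h.
Qed.

Lemma beta_conj beta : beta \in Aut Gs ->
  (forall y, y \in K1 -> beta y \in K1) -> (forall y, y \in H1 -> beta y \in H1) ->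
  exists2 a, a \in N & beta = conj_aut Gs (s2 a).
Proof.
move=> Ab bK1 bH1.
have inj1 := injm_sdpair1 (aut_groupAction K).
have sK : K \subset 'dom ((invm inj1 \o autm Ab) \o s1).
  apply/subsetP=> y Ky; rewrite !inE /= Ky /=.
  have K1y : s1 y \in K1 by apply: mem_morphim.
  by rewrite (subsetP sK1Gs) //= autmE bK1.
pose f := restrm sK ((invm inj1 \o autm Ab) \o s1).
have fE y : y \in K -> s1 (f y) = beta (s1 y).
  move=> Ky; transitivity (s1 (invm inj1 (autm Ab (s1 y)))); first by [].
  rewrite invmK ?autmE //; apply: bK1; exact: mem_morphim.
have injf : 'injm f.
  apply: injm_restrm; apply: injm_comp => //; apply: injm_comp => //.
    exact: injm_autm.
  exact: injm_invm.
have fK : f @* K = K.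
  apply/eqP; rewrite eqEcard card_injm // leqnn andbT.
  apply/subsetP=> _ /morphimP[y _ Ky ->].
  transitivity (invm inj1 (autm Ab (s1 y)) \in K); first by [].
  have sIK : invm inj1 @* (s1 @* K) \subset K by rewrite morphim_invm.
  apply: (subsetP sIK); apply: mem_morphim; rewrite autmE; apply: bK1; exact: mem_morphim.
pose a := aut injf fK.
have Aa : a \in Aut K by apply: Aut_aut.
have aE y : y \in K -> s1 (a y) = beta (s1 y) by move=> Ky; rewrite autE // fE.
have bM : {in Gs &, {morph beta : u v / u * v}}.
  by move=> u v Gu Gv /=; rewrite -!(autmE Ab) morphM.
have bJ : {in Gs &, {morph beta : u v / u ^ v}}.
  by move=> u v Gu Gv /=; rewrite -!(autmE Ab) morphJ.
have sphiA : {in H, forall h, phi h \in Aut K}.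
  by move=> h Hh; apply: (subsetP phiH_Aut); apply: mem_morphim => //; apply: (subsetP nKH).
have s2H1 : {in H, forall h, s2 (phi h) \in H1}.
  by move=> h Hh; apply: mem_morphim; [apply: sphiA | apply: mem_morphim => //; apply: (subsetP nKH)].
have bH : {in H, forall h, beta (s2 (phi h)) = s2 (phi h ^ a) /\ phi h ^ a \in phi @* H}.
  move=> h Hh; have /morphimP[p Ap pH ep] := bH1 _ (s2H1 h Hh).
  suff e: p = phi h ^ a by rewrite ep -e.
  apply: (eq_Aut Ap); first by rewrite groupJ ?sphiA.
  move=> z Kz; rewrite /conjg !permM.
  set y := a^-1 z.
  have Ky : y \in K by apply: Aut_closed; rewrite ?groupV.
  have -> : z = a y by rewrite /y permKV.
  apply: (injmP inj1); rewrite ?(Aut_closed Ap) ?(Aut_closed Aa) ?(Aut_closed (sphiA h Hh)) //.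
  change (s1 (p (a y)) = s1 (a (phi h y))).
  rewrite -(toE (a y) p) sdpair_act ?(Aut_closed Aa) // aE // -ep -bJ ?GsK ?(subsetP sH1Gs) ?s2H1 //.
  by rewrite s2phiE // -aE ?memJ_norm ?(subsetP nKH) // norm_conj_autE ?(subsetP nKH).
have Na : a \in N.
  rewrite inE Aa inE; apply/subsetP=> q; rewrite mem_conjg => /morphimP[h _ Hh eh].
  have [_ Ph] := bH h Hh.
  by rewrite -(conjgKV a q) eh.
have s2aT : s2 a \in 'N(Gs).
  apply: (subsetP sTN); apply: (subsetP (joing_subr _ _)); exact: mem_morphim.
exists a => //.
apply: (eq_Aut Ab); first by apply: (subsetP (Aut_conj_aut Gs 'N(Gs))); apply: mem_morphim.
move=> z /GsP[y Ky [h Hh ->]].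
rewrite norm_conj_autE //; last by rewrite groupM ?GsK ?(subsetP sH1Gs) ?s2H1.
rewrite bM ?GsK ?(subsetP sH1Gs) ?s2H1 // conjMg.
have [-> _] := bH h Hh.
by rewrite -aE // sdpair_act // morphJ ?sphiA.
Qed.


Lemma surjT alpha : alpha \in Aut Gs -> alpha \in conj_aut Gs @* (K1 <*> N1).
Proof.
move=> Aa.
have fK1 : autm Aa @* K1 = K1.
  by case/charP: charK1 => _ /(_ (autm_morphism Aa) (injm_autm Aa) (im_autm Aa)).
have aK1 y : y \in K1 -> alpha y \in K1.
  move=> Ky; have := mem_morphim (autm_morphism Aa) (subsetP sK1Gs y Ky) Ky.
  by rewrite fK1 /= autmE.
have solK1 : solvable K1 by apply: abelian_sol; apply: morphim_abelian.
have sub0 : autm Aa @* H1 \subset Gs.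
  by apply: subset_trans (morphimS _ sH1Gs) _; rewrite im_autm.
have sub : autm Aa @* H1 \subset K1 * H1 by rewrite -GsE.
have cop : coprime #|K1| #|H1|.
  rewrite (card_injm (injm_sdpair1 _)) // -iotaH card_injm ?injm_iota //.
  exact: Frobenius_coprime frobG.
have crd : #|autm Aa @* H1| = #|H1| by rewrite card_injm ?injm_autm ?sH1Gs.
have [x K1x eH] := SchurZassenhaus_trans_sol solK1 nK1H1 sub cop crd.
have Gx : x \in Gs by apply: (subsetP sK1Gs).
have Nx : x \in 'N(Gs) by apply: (subsetP (normG _)).
have NxV : x^-1 \in 'N(Gs) by rewrite groupV.
have Acx : conj_aut Gs x^-1 \in Aut Gs.
  by apply: (subsetP (Aut_conj_aut Gs 'N(Gs))); apply: mem_morphim.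
pose beta := alpha * conj_aut Gs x^-1.
have Ab : beta \in Aut Gs by rewrite groupM.
have bE y : y \in Gs -> beta y = alpha y ^ x^-1.
  by move=> Gy; rewrite permM conj_autE ?groupV ?(Aut_closed Aa).
have bK1 y : y \in K1 -> beta y \in K1.
  by move=> Ky; rewrite bE ?(subsetP sK1Gs) // groupJ ?groupV ?aK1.
have bH1 y : y \in H1 -> beta y \in H1.
  move=> Hy; rewrite bE ?(subsetP sH1Gs) // -mem_conjg -eH.
  have := mem_morphim (autm_morphism Aa) (subsetP sH1Gs y Hy) Hy.
  by [].
have [a Na eb] := beta_conj Ab bK1 bH1.
have Ns2a : s2 a \in 'N(Gs).
  apply: (subsetP sTN); apply: (subsetP (joing_subr _ _)); apply: mem_morphim => //; by case/setIP: Na.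
apply/morphimP; exists (s2 a * x); first by rewrite groupM.
  rewrite groupM //; first by apply: (subsetP (joing_subr _ _)); apply: mem_morphim => //; by case/setIP: Na.
  exact: (subsetP (joing_subl _ _)).
have cm : conj_aut Gs x^-1 * conj_aut Gs x = 1.
  apply: etrans (esym (morphM (conj_aut_morphism Gs) NxV Nx)) _.
  by rewrite mulVg morph1.
have e2 : conj_aut Gs (s2 a * x) = alpha.
  apply: etrans (morphM (conj_aut_morphism Gs) Ns2a Nx) _.
  apply: etrans (congr1 (fun p => p * conj_aut Gs x) (esym eb)) _.
  by rewrite /beta -mulgA cm mulg1.
exact: esym e2.
Qed.

Lemma main_isog : Aut Gs \isog K1 <*> N1.
Proof.
rewrite isog_sym; apply/isogP.
exists (restrm sTN (conj_aut Gs)).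
  rewrite ker_restrm ker_conj_aut; exact: cTGs.
apply/eqP; rewrite eqEsubset restrmEsub // Aut_conj_aut /=.
by apply/subsetP => alpha; apply: surjT.
Qed.

End Main.

Theorem corollary3p4 (gT : finGroupType) (G K H : {group gT}) :
  K ><| H = G -> K :!=: 1 -> H :!=: 1 -> semiregular K H -> abelian K ->
  [Aut G]%G \isog
    (sdpair1 (aut_groupAction K) @* K)
      <*> (sdpair2 (aut_groupAction K) @* 'N_(Aut K)(conj_aut K @* H)).
Proof.
move=> defG ntK ntH reg abK.
exact: isog_trans (AutGs defG ntK reg) (main_isog defG ntK ntH reg abK).
Qed.
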